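(* Let $G=(V,E)$ be a finite simple undirected graph, let $0<p\le 1$, and let $T\subseteq V$ be a set maximizing $f_p(S)$ over all $S\subseteq V$. Then for every $v\in T$ we have $d_v(T)^p\ge f_p(T)/2$.
   Context: For $v\in V$, $N(v)=\{u\in V:(u,v)\in E\}$ (so $v\notin N(v)$). For $S\subseteq V$ and $v\in V$, $d_v(S)=|N(v)\cap S|$. For $p>0$ and nonempty $S\subseteq V$, $f_p(S)=\frac{1}{|S|}\sum_{v\in S}d_v(S)^p$ (with the convention $0^p=0$), and $f_p(\emptyset)=0$. *)

(* Defs.v *)
From mathcomp Require Import all_boot all_order all_algebra.
From mathcomp Require Import all_classical all_reals exp.
Set Implicit Arguments. Unset Strict Implicit. Unset Printing Implicit Defensive.
Import Order.TTheory GRing.Theory Num.Theory.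
Local Open Scope ring_scope.

Definition simple_graph (V : finType) (e : rel V) : Prop :=
  symmetric e /\ irreflexive e.

Definition deg_in (V : finType) (e : rel V) (v : V) (S : {set V}) : nat :=
  #|[set u in S | e u v]|.

(* f_p(S) = (1/|S|) sum_{v in S} d_v(S)^p, f_p(empty) = 0.
   powR 0 p = 0 for p <> 0, matching the convention 0^p = 0. *)
Definition fp (R : realType) (V : finType) (e : rel V) (p : R) (S : {set V}) : R :=
  if S == finset.set0 then 0
  else (#|S|%:R)^-1 * \sum_(v in S) powR (deg_in e v S)%:R p.

(* Main.v *)
Require Import Defs.
From mathcomp Require Import all_boot all_order all_algebra.
From mathcomp Require Import all_classical all_reals exp.
From mathcomp Require Import ring lra.
Import Order.TTheory GRing.Theory Num.Theory.
Local Open Scope ring_scope.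

Lemma keyR (R : realType) (x d p : R) : 1 <= d -> d <= x -> 0 < p -> p <= 1 ->
  powR x p - powR (x-1) p <= powR d p / d.
Proof.
move=> d1 dx p0 p1.
have d0 : 0 < d by apply: lt_le_trans d1.
have x0 : 0 < x by apply: lt_le_trans dx.
have ha : powR x p - powR (x-1) p <= powR x p / x.
  set y := (x - 1) / x.
  have y0 : 0 <= y by apply: divr_ge0; [rewrite subr_ge0; exact: le_trans d1 dx | exact: ltW].
  have y1 : y <= 1 by rewrite ler_pdivrMr // mul1r lerBlDr lerDl.
  have hy : y <= powR y p.
    case: (ltrgt0P y) y0 => // [yp _|-> _]; last by rewrite powR_ge0.
    by apply: ger1_powR => //; rewrite yp y1.
  have -> : x - 1 = y * x by rewrite /y mulfVK // gt_eqF.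
  rewrite powRM //; last exact: ltW.
  have : y * powR x p <= powR y p * powR x p by rewrite ler_wpM2r // powR_ge0.
  have -> : y * powR x p = powR x p - powR x p / x.
    rewrite /y; field; by rewrite gt_eqF.
  lra.
apply: (le_trans ha).
set z := x / d.
have z1 : 1 <= z by rewrite ler_pdivlMr // mul1r.
have -> : x = z * d by rewrite /z mulfVK // gt_eqF.
have z0 : 0 < z by apply: lt_le_trans z1.
rewrite powRM; [|exact: ltW|exact: ltW].
rewrite invfM mulrACA; apply: ler_piMl.
  by apply: divr_ge0; [exact: powR_ge0| exact: ltW].
rewrite ler_pdivrMr // mul1r; exact: ler1_powR.
Qed.

Lemma deg_split (V : finType) (e : rel V) (T : {set V}) (m w : V) :
  m \in T ->
  deg_in e w T = (deg_in e w (T :\ m) + e m w)%N.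
Proof.
move=> mT; rewrite /deg_in (cardsD1 m [set u in T | e u w]) !inE mT /= addnC.
congr (_ + _)%N; apply: eq_card => u; rewrite !inE; by rewrite andbA.
Qed.

Theorem lemma4 (R : realType) (V : finType) (e : rel V) (p : R) (T : {set V}) :
  simple_graph e -> 0 < p -> p <= 1 ->
  (forall S : {set V}, fp e p S <= fp e p T) ->
  forall v, v \in T -> powR (deg_in e v T)%:R p >= fp e p T / 2.
Proof.
move=> [esym eirr] p0 p1 Hmax v vT.
have [m mT mmin] := arg_minnP (fun w => deg_in e w T) vT.
have {}mT : m \in T by [].
have {}mmin : forall w, w \in T -> (deg_in e m T <= deg_in e w T)%N by [].

set d := deg_in e m T.
suff H : fp e p T / 2 <= powR d%:R p.
  apply: (le_trans H); apply: ge0_ler_powR; [exact: ltW| | |].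
  - by rewrite nnegrE ler0n.
  - by rewrite nnegrE ler0n.
  - by rewrite ler_nat; apply: mmin.
have Tn0 : (T == finset.set0) = false by apply/negbTE/set0Pn; exists m.
case S0: (T :\ m == finset.set0).
  have Tm : forall w, w \in T -> w = m.
    move=> w wT; apply/eqP; apply/negPn/negP => wm.
    by move/eqP/setP: S0 => /(_ w); rewrite !inE wm wT.
  have deg0 : forall w, w \in T -> deg_in e w T = 0%N.
    move=> w wT; apply/eqP; rewrite cards_eq0; apply/eqP/setP => u.
    rewrite !inE; apply/negbTE/negP => /andP [uT euw].
    by rewrite (Tm _ uT) (Tm _ wT) eirr in euw.
  rewrite /fp Tn0 big1 ?mulr0 ?mul0r ?powR_ge0 // => w wT.
  by rewrite deg0 // powR0 // gt_eqF.
set S := T :\ m.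
have HS := Hmax S.
rewrite /fp Tn0 S0 in HS *.
have cT : #|T| = (#|S|).+1 by rewrite (cardsD1 m T) mT.
have Sn0 : (0 < #|S|)%N by rewrite card_gt0 S0.
set gT := \sum_(w in T) _ in HS *.
set gS := \sum_(w in S) _ in HS.
set c := powR d%:R p / d%:R.
have C : gT - gS <= powR d%:R p + powR d%:R p.
  rewrite /gT (big_setD1 m mT) /= -/S -addrA lerD2l /gS -sumrB.
  apply: (@le_trans _ _ (\sum_(w in S) (if e w m then c else 0))).
    apply: ler_sum => w wS.
    have wT : w \in T by move: wS; rewrite !inE => /andP [].
    rewrite (@deg_split _ e T m w mT) -/S (esym m w).
    case: (boolP (e w m)) => ewm; last by rewrite addn0 subrr.
    have hT : deg_in e w T = (deg_in e w S).+1.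
      by rewrite (@deg_split _ e T m w mT) (esym m w) ewm addn1.
    rewrite addn1 -natr1.
    have K := @keyR R ((deg_in e w S)%:R + 1) d%:R p.
    rewrite addrK in K; apply: K => //.
    - rewrite ler1n /d lt0n cards_eq0; apply/set0Pn; exists w; by rewrite inE wT.
    - rewrite natr1 -hT ler_nat; exact: mmin.
  rewrite -big_mkcondr.
  have -> : \sum_(w in S | e w m) c = \sum_(w in [set u in S | e u m]) c.
    by apply: eq_bigl => w; rewrite inE.
  rewrite sumr_const.
  have -> : #|[set u in S | e u m]| = d.
    apply: eq_card => u; rewrite !inE.
    case: (eqVneq u m) => [->|]; by rewrite ?eirr ?andbF.
  rewrite -[c *+ d]mulr_natr /c.
  case: (posnP d) => [->|dp]; first by rewrite mulr0 powR_ge0.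
    by rewrite divfK // pnatr_eq0 -lt0n.
rewrite cT -natr1 in HS * .
have nS0 : 0 < (#|S|)%:R :> R by rewrite ltr0n.
set n := (#|S|)%:R in HS C nS0 *.
set F := (n + 1)^-1 * gT.
have n1 : 0 < n + 1 by lra.
have gTe : gT = F * (n + 1) by rewrite /F; field; rewrite gt_eqF.
have gSe : gS <= F * n.
  have -> : gS = (n^-1 * gS) * n by field; rewrite gt_eqF.
  by apply: ler_wpM2r; [exact: ltW| exact: HS].
set P := powR d%:R p in C *.
have : F <= P + P.
  move: C; rewrite gTe; move: gSe; rewrite mulrDr mulr1.
  set Fn := F * n; lra.
lra.
Qed.
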